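(* Let $\gamma > 1$ satisfy $\gamma(\gamma - 1)^2 > 1$, and let $I$ be a $\gamma$-stable instance of the metric Steiner tree problem with optimal Steiner tree $\mathrm{OPT}$. Let $H$ be a subgraph of $\mathrm{OPT}$ with at least two vertices, let $ab$ be an edge of $H$, and let $c \in V(\mathrm{OPT}) \setminus V(H)$. Then $w_{ca} < \frac{1}{\gamma - 1} w_{ab}$ if and only if $ca$ is an edge of $\mathrm{OPT}$.
   Context: An instance of the metric Steiner tree problem consists of a finite set $V$ of points of a metric space with metric $d$, a set $T \subseteq V$ of terminals, and the complete graph on $V$ with edge weights $w_{uv} = d(u,v)$. Points of $V \setminus T$ are Steiner points. A Steiner tree is a tree in this complete graph whose vertex set contains all of $T$; its weight is the sum of its edge weights. For $\gamma > 1$, the instance is $\gamma$-stable if it has a minimum-weight Steiner tree $\mathrm{OPT}$ such that for every $w' : V \times V \to \mathbb{R}_{\ge 0}$ with $w_{uv} \le w'_{uv} \le \gamma w_{uv}$ for all $u,v$, every minimum-weight Steiner tree with respect to $w'$ equals $\mathrm{OPT}$. $V(\mathrm{OPT})$ and $V(H)$ denote vertex sets. *)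

(* Defs.v *)
From HB Require Import structures.
From mathcomp Require Import all_boot all_order all_algebra.
Set Implicit Arguments. Unset Strict Implicit. Unset Printing Implicit Defensive.
Import Order.TTheory GRing.Theory Num.Theory.
Local Open Scope ring_scope.

Section Steiner.
Variables (R : realFieldType) (V : finType).

Definition is_metric (d : V -> V -> R) : Prop :=
  [/\ forall x y, 0 <= d x y,
      forall x y, d x y = 0 <-> x = y,
      forall x y, d x y = d y x &
      forall x y z, d x z <= d x y + d y z].

(* A graph in the complete graph on V: a vertex set and a set of edges,
   each edge being a 2-element subset {u,v} (u <> v). *)
Definition graph := ({set V} * {set {set V}})%type.

Definition gverts (G : graph) : {set V} := G.1.
Definition gedges (G : graph) : {set {set V}} := G.2.

Definition is_graph (G : graph) : Prop :=
  forall e, e \in gedges G ->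
    exists u v, [/\ u != v, e = [set u; v], u \in gverts G & v \in gverts G].

Definition gadj (G : graph) : rel V := fun x y => [set x; y] \in gedges G.

Definition is_tree (G : graph) : Prop :=
  [/\ is_graph G, gverts G != set0,
      (forall x y, x \in gverts G -> y \in gverts G -> connect (gadj G) x y) &
      #|gedges G| = (#|gverts G|).-1]%N.

Definition is_steiner_tree (T : {set V}) (G : graph) : Prop :=
  is_tree G /\ T \subset gverts G.

(* Weight of the edge {u,v} under w : V -> V -> R (average of the two
   orientations, which is w u v for symmetric w). *)
Definition edge_weight (w : V -> V -> R) (e : {set V}) : R :=
  (\sum_(u in e) \sum_(v in e | u != v) w u v) / 2%:R.

Definition weight (w : V -> V -> R) (G : graph) : R :=
  \sum_(e in gedges G) edge_weight w e.

Definition is_min_steiner_tree (w : V -> V -> R) (T : {set V}) (G : graph) : Prop :=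
  is_steiner_tree T G /\
  forall G', is_steiner_tree T G' -> weight w G <= weight w G'.

Definition stable_with (gamma : R) (d : V -> V -> R) (T : {set V}) (OPT : graph) : Prop :=
  is_min_steiner_tree d T OPT /\
  forall w' : V -> V -> R,
    (forall u v, d u v <= w' u v <= gamma * d u v) ->
    forall G, is_min_steiner_tree w' T G -> G = OPT.

Definition is_subgraph (H G : graph) : Prop :=
  [/\ is_graph H, gverts H \subset gverts G & gedges H \subset gedges G].

End Steiner.

(* Main.v *)
Require Import Defs.
From HB Require Import structures.
From mathcomp Require Import all_boot all_order all_algebra.
From mathcomp Require Import ring lra.
From Stdlib Require Import Classical.
Import Order.TTheory GRing.Theory Num.Theory.
Local Open Scope ring_scope.
Set Implicit Arguments. Unset Strict Implicit. Unset Printing Implicit Defensive.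

Section Aux.
Variable V : finType.

Definition adjE (E : {set {set V}}) : rel V := fun x y => [set x; y] \in E.

Lemma set2C (x y : V) : [set x; y] = [set y; x].
Proof. by rewrite setUC. Qed.

Lemma adjE_sym E : symmetric (adjE E).
Proof. by move=> x y; rewrite /adjE set2C. Qed.

Lemma adjE_csym E x y : connect (adjE E) x y = connect (adjE E) y x.
Proof. exact: (sym_connect_sym (adjE_sym E)). Qed.

Lemma connect_mono (E1 E2 : {set {set V}}) x y : E1 \subset E2 ->
  connect (adjE E1) x y -> connect (adjE E2) x y.
Proof. move=> sE; apply: connect_sub => u v h; apply: connect1; exact: (subsetP sE). Qed.

Lemma set2_eq (x y p q : V) : [set x; y] = [set p; q] -> (x = p /\ y = q) \/ (x = q /\ y = p).
Proof.
move=> h.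
have hx : x \in [set p; q] by rewrite -h set21.
have hy : y \in [set p; q] by rewrite -h set22.
have hp : p \in [set x; y] by rewrite h set21.
have hq : q \in [set x; y] by rewrite h set22.
case/set2P: hx => ?; case/set2P: hy => ?; subst; auto.
- by case/set2P: hq => ?; subst; auto.
- by case/set2P: hp => ?; subst; auto.
Qed.

Section Count.
Variables (E : {set {set V}}) (r : V).
Let e := adjE E.
Definition stepS (S : {set V}) := S :|: [set y | [exists x in S, e x y]].
Definition Lk k := iter k stepS [set r].

Lemma Lk_conn w : connect e w r -> exists k, w \in Lk k.
Proof.
case/connectP => p; elim: p w => [|y p IH] w /=.
  by move=> _ <-; exists 0%N; rewrite /Lk /= set11.
case/andP => ewy py lr; case: (IH y py lr) => k hk; exists k.+1.
rewrite /Lk iterS /stepS -/(Lk k) inE; apply/orP; right; rewrite inE; apply/existsP; exists y.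
rewrite hk /= /e adjE_sym; exact ewy.
Qed.

Definition Pd w k := (w \in Lk k) || ~~ connect e w r.
Lemma Pd_ex w : exists k, Pd w k.
Proof.
case: (boolP (connect e w r)) => h; last by exists 0%N; rewrite /Pd h orbT.
by case: (Lk_conn h) => k hk; exists k; rewrite /Pd hk.
Qed.
Definition dist w := ex_minn (Pd_ex w).
Lemma dist_le w k : w \in Lk k -> (dist w <= k)%N.
Proof. move=> h; rewrite /dist; case: ex_minnP => m _; apply; by rewrite /Pd h. Qed.
Lemma dist_spec w : connect e w r ->
  w \in Lk (dist w) /\ forall k, w \in Lk k -> (dist w <= k)%N.
Proof.
move=> cw; split; last exact: dist_le.
rewrite /dist; case: ex_minnP => m; by rewrite /Pd cw orbF.
Qed.

Lemma parent_ex w : connect e w r -> w != r -> exists x, e x w && (dist x < dist w)%N.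
Proof.
move=> cw nwr; case: (dist_spec cw); move: (dist w) => k.
case: k => [|k] hk hmin; first by move: hk; rewrite /Lk /= inE (negbTE nwr).
move: hk; rewrite /Lk iterS -/(Lk k) /stepS inE => /orP[hk|].
  by have := hmin _ hk; rewrite ltnn.
rewrite inE => /existsP[x /andP[xk exw]]; exists x; rewrite exw /=.
exact: leq_ltn_trans (dist_le xk) _.
Qed.

Definition parent w := odflt w [pick x | e x w && (dist x < dist w)%N].

Lemma count_le (W : {set V}) : r \in W -> (forall x, x \in W -> connect e x r) ->
  (#|W|.-1 <= #|E|)%N.
Proof.
move=> rW cW.
pose f w := [set w; parent w].
have par w : w \in W :\ r -> e (parent w) w && (dist (parent w) < dist w)%N.
  rewrite in_setD1 => /andP[nwr wW]; rewrite /parent; case: pickP => [x -> //|none].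
  by case: (parent_ex (cW _ wW) nwr) => x hx; rewrite none in hx.
have inj : {in W :\ r &, injective f}.
  move=> w1 w2 h1 h2 /set2_eq [[]//|[e1 e2]].
  have := par _ h1; have := par _ h2; rewrite -e1 e2 => /andP[_ l1] /andP[_ l2].
  by move: (ltn_trans l1 l2); rewrite ltnn.
have sub : f @: (W :\ r) \subset E.
  apply/subsetP => _ /imsetP[w hw ->]; have /andP[h _] := par _ hw.
  rewrite /f set2C; exact h.
rewrite (cardsD1 r W) rW add1n /=.
by have := subset_leq_card sub; rewrite card_in_imset.
Qed.
End Count.

Lemma tree_nocycle (G : graph V) p q : is_tree G -> [set p; q] \in gedges G ->
  ~~ connect (adjE (gedges G :\ [set p; q])) p q.
Proof.
case=> gG ne cG cE ePQ; apply/negP => cpq.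
have [u [v [_ huv uW vW]]] := gG _ ePQ.
have pW : p \in gverts G by case: (set2_eq huv) => [[-> _]|[-> _]].
have key : forall x, x \in gverts G -> connect (adjE (gedges G :\ [set p; q])) x p.
  move=> x xW; have := cG x p xW pW; apply: connect_sub => y z hyz.
  case: (eqVneq [set y; z] [set p; q]) => hyz'.
    by case: (set2_eq hyz') => [[-> ->]|[-> ->]]; [|rewrite adjE_csym].
  by apply: connect1; rewrite /adjE in_setD1 hyz'; exact hyz.
have := count_le pW key.
by rewrite -cE (cardsD1 [set p; q] (gedges G)) ePQ add1n ltnn.
Qed.

Lemma last_edge (E : {set {set V}}) c a : c != a -> connect (adjE E) c a ->
  exists x, [/\ x != a, [set x; a] \in E & connect (adjE (E :\ [set x; a])) c x].
Proof.
move=> + /connectP[p0 pp0 la]; rewrite la.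
case: (shortenP pp0) => p pp up _.
case/lastP: p pp up => [|p' a']; first by rewrite /= eqxx.
rewrite last_rcons rcons_path -rcons_cons rcons_uniq => /andP[pp' ex] /andP[na _] nca.
have xin := mem_last c p'.
have xna : last c p' != a' by apply: contraNneq na => <-.
exists (last c p'); split => //.
apply/connectP; exists p' => //.
have hall : all (predC1 a') (c :: p').
  by apply/allP => y hy; rewrite /= ; apply: contraNneq na => <-; exact hy.
apply: (sub_in_path (P := predC1 a') _ hall pp').
move=> y z; rewrite !inE => ya za hyz; rewrite /adjE in_setD1; move: hyz; rewrite /adjE => ->; rewrite andbT.
apply/negP => /eqP /set2_eq [[_ hz]|[hy _]].
  by rewrite hz eqxx in za.
by rewrite hy eqxx in ya.
Qed.

Lemma exists_min (R : realFieldType) (X : finType) (P : X -> Prop) (f : X -> R) x0 :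
  P x0 -> exists y, P y /\ forall z, P z -> f y <= f z.
Proof.
move=> Px0; have [n Hn] := ubnP #|[set z | f z < f x0]|.
elim: n x0 Hn Px0 => // n IH x0 Hn Px0.
case: (classic (exists z, P z /\ f z < f x0)) => [[z [Pz lt]]|no].
  apply: (IH z) => //; rewrite ltnS in Hn; apply: leq_trans Hn.
  apply: proper_card; apply/properP; split.
    by apply/subsetP => w; rewrite !inE => h; exact: lt_trans h lt.
  by exists z; rewrite !inE ?lt ?ltxx.
exists x0; split => // z Pz; rewrite leNgt; apply/negP => h; apply: no; by exists z.
Qed.

End Aux.

Lemma ew2 (R : realFieldType) (V : finType) (w : V -> V -> R) x y : x != y ->
  edge_weight w [set x; y] = (w x y + w y x) / 2%:R.
Proof.
move=> nxy; rewrite /edge_weight big_setU1 /=; last by rewrite inE.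
rewrite big_set1 !big_mkcondr /= !big_setU1 /= ?inE // !big_set1 eqxx (negbTE nxy) eq_sym (negbTE nxy).
by rewrite eqxx /= !add0r addr0.
Qed.

Lemma ew2s (R : realFieldType) (V : finType) (d : V -> V -> R) x y : x != y ->
  (forall x y, d x y = d y x) -> edge_weight d [set x; y] = d x y.
Proof. move=> nxy ds; rewrite ew2 // (ds y x); lra. Qed.

Lemma swap (R : realFieldType) (V : finType) (d : V -> V -> R) (T : {set V}) (gamma : R)
  (OPT : graph V) p q u v :
  1 < gamma -> is_metric d -> stable_with gamma d T OPT ->
  [set p; q] \in gedges OPT -> p != q ->
  u != v -> u \in gverts OPT -> v \in gverts OPT -> [set u; v] \notin gedges OPT ->
  connect (adjE (gedges OPT :\ [set p; q])) u p ->
  connect (adjE (gedges OPT :\ [set p; q])) v q ->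
  gamma * d p q < d u v.
Proof.
move=> g1 [d0 dz dsym dtri] [[[treeO TO] minO] stab] ePQ npq nuv uW vW fE cu cv.
case: (treeO) => gO neO cO cardO.
set E := gedges OPT in ePQ fE cu cv cardO cO gO *.
set W := gverts OPT in uW vW TO cardO cO gO neO *.
set e0 := [set p; q] in ePQ cu cv *.
set f := [set u; v] in fE *.
rewrite ltNge; apply/negP => hle.
pose w' x y := if [set x; y] == e0 then gamma * d x y else d x y.
pose G' : graph V := (W, f |: (E :\ e0)).
have fne : f != e0 by apply: contraNneq fE => ->.
have ewG : forall G : graph V, is_graph G -> weight w' G =
    \sum_(e in gedges G) (if e == e0 then gamma * edge_weight d e else edge_weight d e).
  move=> G gG; apply: eq_bigr => e he; have [x [y [nxy -> _ _]]] := gG e he.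
  rewrite !ew2 // /w' (set2C y x); case: ifP => _ //.
  by rewrite -mulrDr mulrA.
have isgG' : is_graph G'.
  move=> e; rewrite /= in_setU1 in_setD1 => /orP[/eqP->|/andP[_ he]]; first by exists u, v.
  exact: gO e he.
have sub : E :\ e0 \subset f |: (E :\ e0) by apply: subsetUr.
have treeG' : is_tree G'.
  split => //=.
  - move=> x y xW yW; have := cO x y xW yW; apply: connect_sub => a b hab.
    case: (eqVneq [set a; b] e0) => h.
    + have cpq : connect (adjE (f |: (E :\ e0))) p q.
        apply: (connect_trans (y:=u)); first by rewrite adjE_csym; exact: connect_mono sub cu.
        apply: (connect_trans (y:=v)); first by apply: connect1; rewrite /adjE setU11.
        exact: connect_mono sub cv.
      by case: (set2_eq h) => [[-> ->]|[-> ->]]; [|rewrite adjE_csym].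
    + apply: connect1; rewrite /gadj /= in_setU1 in_setD1 h.
      by move: hab; rewrite /gadj => ->; rewrite orbT.
  - rewrite cardsU1 in_setD1 (negbTE fE) andbF /= add1n.
    by rewrite (cardsD1 e0 E) ePQ add1n in cardO.
have stG' : is_steiner_tree T G' by split.
have [G0 [stG0 minG0]] := exists_min (weight w') stG'.
have w'ok : forall x y, d x y <= w' x y <= gamma * d x y.
  move=> x y; have := d0 x y; rewrite /w'; case: ifP => _ h; apply/andP; split; nra.
have G0O : G0 = OPT := stab w' w'ok G0 (conj stG0 minG0).
have minO' : forall G, is_steiner_tree T G -> weight w' OPT <= weight w' G.
  by rewrite -G0O.
have : G' = OPT.
  apply: (stab w' w'ok); split => // G stG; apply: le_trans (minO' G stG).
  rewrite !ewG // [X in _ <= X](bigD1 e0) //= eqxx big_setU1 /=; last first.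
    by rewrite in_setD1 (negbTE fE) andbF.
  rewrite (negbTE fne).
  set S1 := \sum_(i in E :\ e0) _.
  set S2 := \sum_(i in E | i != e0) _.
  have -> : S1 = S2 by apply: eq_bigl => i; rewrite in_setD1 andbC.
  rewrite lerD2r /f /e0 !ew2s //.
move=> eq; have : e0 \in gedges G' by rewrite eq.
rewrite /G' /gedges /= in_setU1 in_setD1 eqxx /= orbF => /eqP h.
by rewrite h eqxx in fne.
Qed.

Unset Implicit Arguments.

Theorem mainTheorem4 (R : realFieldType) (V : finType) (d : V -> V -> R)
  (T : {set V}) (gamma : R) (OPT H : graph V) (a b c : V) :
  1 < gamma ->
  1 < gamma * (gamma - 1) ^+ 2 ->
  is_metric d ->
  stable_with gamma d T OPT ->
  is_subgraph H OPT ->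
  (2 <= #|gverts H|)%N ->
  a != b -> [set a; b] \in gedges H ->
  c \in gverts OPT -> c \notin gverts H ->
  (d c a < (gamma - 1)^-1 * d a b <-> [set c; a] \in gedges OPT).
Proof.
move=> g1 gg met stb [gH sHO eHO] _ nab eab cW cnH.
have met' := met; case: met' => d0 dz dsym dtri.
have stb' := stb; case: stb' => [[[treeO TO] minO] stab].
have treeO' := treeO; case: treeO' => gO neO cO cardO.
have [u0 [v0 [_ huv uH vH]]] := gH _ eab.
have aH : a \in gverts H by case: (set2_eq huv) => [[-> _]|[-> _]].
have bH : b \in gverts H by case: (set2_eq huv) => [[_ ->]|[_ ->]].
have ca : c != a by apply: contraNneq cnH => ->.
have cb : c != b by apply: contraNneq cnH => ->.
have eabO : [set a; b] \in gedges OPT := subsetP eHO _ eab.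
have aW : a \in gverts OPT := subsetP sHO _ aH.
have bW : b \in gverts OPT := subsetP sHO _ bH.
have dabp : 0 < d a b.
  rewrite lt_def d0 andbT; apply/negP => /eqP /dz h; by rewrite h eqxx in nab.
have g0 : 0 < gamma - 1 by rewrite subr_gt0.
have g2 : 1 <= gamma * (gamma - 1) by nra.
rewrite mulrC -/(d a b / (gamma - 1)) ltr_pdivlMr //.
split.
- move=> hlt.
  case: (boolP ([set c; a] \in gedges OPT)) => // nca; exfalso.
  have [x [xa exa cx]] := last_edge ca (cO c a cW aW).
  have xW : x \in gverts OPT.
    have [u1 [v1 [_ h _ _]]] := gO _ exa.
    have [u2 [v2 [_ h2 u2W v2W]]] := gO _ exa.
    by case: (set2_eq h2) => [[-> _]|[-> _]].
  have h1 : gamma * d x a < d c a := swap g1 met stb exa xa ca cW aW nca cx (connect0 _ _).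
  case: (eqVneq x b) => [xb|xnb].
    subst x; rewrite (dsym b a) in h1; nra.
  have xanab : [set x; a] != [set a; b].
    by apply/negP => /eqP /set2_eq [[xa' _]|[xb' _]]; [rewrite xa' eqxx in xa|rewrite xb' eqxx in xnb].
  have xbnab : [set x; b] != [set a; b].
    apply/negP => /eqP /set2_eq [[xa' _]|[xb' _]]; first by rewrite xa' eqxx in xa.
    by rewrite xb' eqxx in xnb.
  have nxb : [set x; b] \notin gedges OPT.
    apply/negP => exb; have := tree_nocycle treeO eabO; apply/negP; rewrite negbK.
    apply: (connect_trans (y:=x)); apply: connect1; rewrite /adjE in_setD1.
      by rewrite set2C xanab exa.
    by rewrite xbnab exb.
  have h2 : gamma * d a b < d x b.
    apply: (swap g1 met stb eabO nab xnb xW bW nxb _ (connect0 _ _)).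
    by apply: connect1; rewrite /adjE in_setD1 xanab exa.
  have t := dtri x a b.
  have s1 : (gamma - 1) * d a b < d x a by lra.
  have s2 : (gamma - 1) * (gamma * ((gamma - 1) * d a b)) < (gamma - 1) * (gamma * d x a).
    by rewrite ltr_pM2l // ltr_pM2l // (lt_trans ltr01 g1).
  have s3 : (gamma - 1) * (gamma * d x a) < (gamma - 1) * d c a by rewrite ltr_pM2l.
  have s4 : d a b < gamma * (gamma - 1) ^+ 2 * d a b by rewrite -{1}(mul1r (d a b)) ltr_pM2r.
  have e1 : (gamma - 1) * (gamma * ((gamma - 1) * d a b)) = gamma * (gamma - 1) ^+ 2 * d a b.
    by rewrite expr2; ring.
  lra.
- move=> eca.
  have bcna : [set b; a] != [set c; a].
    apply/negP => /eqP /set2_eq [[bc _]|[ba _]]; first by rewrite bc eqxx in cb.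
    by rewrite ba eqxx in nab.
  have cbnca : [set c; b] != [set c; a].
    apply/negP => /eqP /set2_eq [[_ ba]|[ca' _]]; first by rewrite ba eqxx in nab.
    by rewrite ca' eqxx in ca.
  have ncb : [set c; b] \notin gedges OPT.
    apply/negP => ecb; have := tree_nocycle treeO eca; apply/negP; rewrite negbK.
    apply: (connect_trans (y:=b)); apply: connect1; rewrite /adjE in_setD1.
      by rewrite cbnca ecb.
    by rewrite bcna set2C eabO.
  have h : gamma * d c a < d c b.
    apply: (swap g1 met stb eca ca cb cW bW ncb (connect0 _ _)).
    by apply: connect1; rewrite /adjE in_setD1 bcna set2C eabO.
  have t := dtri c a b.
  lra.
Qed.
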